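(* In the joint design model with fully flexible users described in the context, let $\mathcal{M}^*=\{m:S(m)=S_{\min}\}$ and pick any $m^*\in\mathcal{M}^*$. Define profiles $\mathbf P^*$ by $$P^*_{n,t}(m)=\begin{cases}1-\tilde q_{n,t},&m=m^*,\\0,&m\ne m^*,\end{cases}$$ and let $$\mathbf x^*=\arg\min_{\mathbf x}\frac1T\sum_{t=0}^{T-1}\mathbb{E}\Bigl[C\Bigl(L^*_t+\sum_{m,n}(x_{n,t+1}(m)-x_{n,t}(m)I^*_{n,t}(m))\Bigr)\Bigr]$$ subject to $0\le x_{n,t}(m)\le S(m)$ for all $m,n,t$. Here $I^*_{n,t}(m)$ are the demand indicators under $\mathbf P^*$ and $L^*_t=\sum_{m,n}S(m)I^*_{n,t}(m)$. Then $(\mathbf P^*,\mathbf x^* )$ is a globally optimal solution of the joint problem. Moreover, if $|\mathcal{M}^*|=1$, then $(\mathbf P^*,\mathbf x^* )$ is the unique optimal solution.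
   Context: There are $N$ users, $M$ data items of sizes $S(m)>0$ with $S_{\min}=\min_mS(m)$, and a period of $T$ slots; slot indices are modulo $T$ and $x_{n,T}=x_{n,0}$. Each user $n$ has an initial demand profile $\tilde{\mathbf P}_{n,t}$ for each slot $t$, with inactivity probability $\tilde q_{n,t}=1-\sum_m\tilde P_{n,t}(m)$. For any choice of profiles $\mathbf P=(\mathbf P_{n,t})$, the demand indicators $I_{n,t}(m)\in\{0,1\}$ satisfy $\Pr(I_{n,t}(m)=1)=P_{n,t}(m)$ and $\sum_mI_{n,t}(m)\le1$, with independence across distinct users in the same slot. The load is $L_t=\sum_{m,n}S(m)I_{n,t}(m)$. The cost function $C:\mathbb{R}_+\to\mathbb{R}_+$ is smooth, strictly convex and increasing. Joint problem: minimize $$\frac1T\sum_{t=0}^{T-1}\mathbb{E}\Bigl[C\Bigl(L_t+\sum_{m=1}^M\sum_{n=1}^N(x_{n,t+1}(m)-x_{n,t}(m)I_{n,t}(m))\Bigr)\Bigr]$$ over $(\mathbf P,\mathbf x)$, where the expectation is under the profiles $\mathbf P$. The constraints are $0\le x_{n,t}(m)\le S(m)$ and $\mathbf P_{n,t}\in\mathcal F_{n,t}$ for all $n,t$. Under full flexibility, $\mathcal F_{n,t}=\{\mathbf P_{n,t}:P_{n,t}(m)\ge0\ \forall m,\ \sum_mP_{n,t}(m)=1-\tilde q_{n,t}\}$. *)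

(* Defs.v *)
From HB Require Import structures.
From mathcomp Require Import all_boot all_order all_algebra.
From mathcomp Require Import all_classical all_reals all_analysis.
Set Implicit Arguments. Unset Strict Implicit. Unset Printing Implicit Defensive.
Import Order.TTheory GRing.Theory Num.Theory.
Local Open Scope ring_scope.

Section Model.
Variables (R : realType) (N M T : nat).

(* A profile / prefetch family indexed by user n, slot t, item m. *)
Definition fam := 'I_N -> 'I_T -> 'I_M -> R.

Definition qtilde (Pt : fam) (n : 'I_N) (t : 'I_T) : R :=
  1 - \sum_(m < M) Pt n t m.

Definition valid_initial (Pt : fam) : Prop :=
  (forall n t m, 0 <= Pt n t m) /\ (forall n t, \sum_(m < M) Pt n t m <= 1).

Definition flexible_feasible (Pt P : fam) : Prop :=
  forall n t, (forall m, 0 <= P n t m) /\ \sum_(m < M) P n t m = 1 - qtilde Pt n t.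

Definition x_feasible (S : 'I_M -> R) (x : fam) : Prop :=
  forall n t m, 0 <= x n t m <= S m.

(* Probability that user n in slot t is in demand state c
   (None = inactive, Some m = requests item m). *)
Definition state_prob (P : fam) (n : 'I_N) (t : 'I_T) (c : option 'I_M) : R :=
  match c with
  | None => 1 - \sum_(m < M) P n t m
  | Some m => P n t m
  end.

Definition ind (c : {ffun 'I_N -> option 'I_M}) (n : 'I_N) (m : 'I_M) : R :=
  (c n == Some m)%:R.

(* The argument of C in slot t (slot t+1 taken modulo T via ordS). *)
Definition slot_arg (S : 'I_M -> R) (x : fam) (t : 'I_T)
    (c : {ffun 'I_N -> option 'I_M}) : R :=
  \sum_(m < M) \sum_(n < N) S m * ind c n m
  + \sum_(m < M) \sum_(n < N) (x n (ordS t) m - x n t m * ind c n m).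

(* E[C(...)] in slot t: users are independent within a slot, each with the
   categorical law given by P_{n,t} and inactivity 1 - sum_m P_{n,t}(m). *)
Definition slot_cost (C : R -> R) (S : 'I_M -> R) (P x : fam) (t : 'I_T) : R :=
  \sum_(c : {ffun 'I_N -> option 'I_M})
     (\prod_(n < N) state_prob P n t (c n)) * C (slot_arg S x t c).

Definition objective (C : R -> R) (S : 'I_M -> R) (P x : fam) : R :=
  (T%:R)^-1 * \sum_(t < T) slot_cost C S P x t.

Definition Mstar (S : 'I_M -> R) : {set 'I_M} :=
  [set m | [forall m', S m <= S m']].

Definition Pstar (Pt : fam) (mstar : 'I_M) : fam :=
  fun n t m => if m == mstar then 1 - qtilde Pt n t else 0.

(* Assumptions on the cost C : R_+ -> R_+ (only its values on [0,oo) matter). *)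
Definition cost_ok (C : R -> R) : Prop :=
  (forall y, 0 <= y -> 0 <= C y)
  /\ (forall y z, 0 <= y -> y <= z -> C y <= C z)
  /\ (forall y z l, 0 <= y -> 0 <= z -> y != z -> 0 < l < 1 ->
        C (l * y + (1 - l) * z) < l * C y + (1 - l) * C z)
  /\ (forall (k : nat) (y : R), 0 < y -> derivable (derive1n k C) y 1).

End Model.

(* Main.v *)
Require Import Defs.
From HB Require Import structures.
From mathcomp Require Import all_boot all_order all_algebra.
From mathcomp Require Import all_classical all_reals all_analysis.
From mathcomp Require Import ring lra.
Import Order.TTheory GRing.Theory Num.Theory.
Local Open Scope ring_scope.

Lemma sum_opt (R : nmodType) (M : nat) (F : option 'I_M -> R) :
  \sum_(o : option 'I_M) F o = F None + \sum_(m < M) F (Some m).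
Proof.
rewrite (bigD1 None) //=; congr (_ + _).
rewrite (reindex_omap Some id); last by case.
by apply: eq_bigl => m /=; rewrite eqxx.
Qed.

Lemma push (R : comNzRingType) (I J : finType) (p q : I -> J -> R) (f : J -> J)
  (G : {ffun I -> J} -> R) :
  (forall i d, q i d = \sum_(c : J) p i c * (f c == d)%:R) ->
  \sum_(d : {ffun I -> J}) (\prod_i q i (d i)) * G d =
  \sum_(c : {ffun I -> J}) (\prod_i p i (c i)) * G [ffun i => f (c i)].
Proof.
move=> H.
under eq_bigr => d _ do
  rewrite (eq_bigr _ (fun i _ => H i (d i))) bigA_distr_bigA big_distrl /=.
rewrite exchange_big /=; apply: eq_bigr => c _.
rewrite (bigD1 [ffun i => f (c i)]) //= [X in _ + X]big1 ?addr0.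
  rewrite big_split /= [X in _ * X * _]big1 ?mulr1 //.
  by move=> i _; rewrite ffunE eqxx.
move=> d /eqP Hd.
have [i Hi] : exists i, f (c i) != d i.
  apply/existsP; apply: contraT; rewrite negb_exists => /forallP Ha.
  apply: False_ind; apply: Hd; apply/ffunP => i; rewrite ffunE.
  by move: (Ha i); rewrite negbK => /eqP.
by rewrite (bigD1 i) //= (negbTE Hi) mulr0 !mul0r.
Qed.

Definition Yv {R : realType} {N M T : nat} (S : 'I_M -> R) (x : fam R N M T)
  (n : 'I_N) (t : 'I_T) (o : option 'I_M) : R :=
  match o with None => 0 | Some m => S m - x n t m end.

Lemma sum_ind {R : realType} {N M : nat} (c : {ffun 'I_N -> option 'I_M}) n
  (g : 'I_M -> R) :
  \sum_(m < M) g m * ind R c n m = match c n with Some m0 => g m0 | None => 0 end.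
Proof.
rewrite /ind; case: (c n) => [m0|].
  rewrite (bigD1 m0) //= eqxx mulr1 big1 ?addr0 // => m Hm.
  have -> : (Some m0 == Some m) = false.
    by apply/negbTE/eqP => -[E]; move: Hm; rewrite E eqxx.
  by rewrite mulr0.
by rewrite big1 // => m _; rewrite mulr0.
Qed.

Lemma slot_arg_eq (R : realType) (N M T : nat) (S : 'I_M -> R) (x : fam R N M T)
  t c :
  slot_arg S x t c = \sum_(n < N) (\sum_(m < M) x n (ordS t) m + Yv S x n t (c n)).
Proof.
rewrite /slot_arg [X in X + _]exchange_big [X in _ + X]exchange_big -big_split /=.
apply: eq_bigr => n _.
rewrite sumrB (sum_ind _ _ S) (sum_ind _ _ (x n t)).
by case: (c n) => [m0|] /=; ring.
Qed.

Definition xp {R : realType} {N M T : nat} (S : 'I_M -> R) (mstar : 'I_M)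
  (x : fam R N M T) : fam R N M T :=
  fun n t m => if m == mstar then Num.min (\sum_(k < M) x n t k) (S mstar) else 0.

Lemma sum_if {R : realType} {M : nat} (mstar : 'I_M) (v : R) :
  \sum_(m < M) (if m == mstar then v else 0) = v.
Proof. by rewrite (bigD1 mstar) //= eqxx big1 ?addr0 // => m /negbTE ->. Qed.

Lemma xp_sum {R : realType} {N M T : nat} (S : 'I_M -> R) mstar (x : fam R N M T) n t :
  \sum_(m < M) xp S mstar x n t m = Num.min (\sum_(k < M) x n t k) (S mstar).
Proof. exact: sum_if. Qed.

Lemma xsum_ge0 {R : realType} {N M T : nat} (S : 'I_M -> R) (x : fam R N M T) n t :
  x_feasible S x -> 0 <= \sum_(k < M) x n t k.
Proof. by move=> hx; apply: sumr_ge0 => k _; case/andP: (hx n t k). Qed.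

Lemma xp_feas {R : realType} {N M T : nat} (S : 'I_M -> R) mstar (x : fam R N M T) :
  (forall m, 0 < S m) -> x_feasible S x -> x_feasible S (xp S mstar x).
Proof.
move=> hS hx n t m; rewrite /xp; case: eqP => [->|_]; last by rewrite lexx ltW.
have h0 := xsum_ge0 S x n t hx; have h1 := hS mstar.
by rewrite le_min ge_min lexx orbT h0 ltW.
Qed.

Definition fo {M : nat} (mstar : 'I_M) (o : option 'I_M) : option 'I_M :=
  if o is Some _ then Some mstar else None.

Lemma sum_Pstar {R : realType} {N M T : nat} (Pt : fam R N M T) mstar n t :
  \sum_(m < M) Pstar Pt mstar n t m = 1 - qtilde Pt n t.
Proof. exact: sum_if. Qed.

Lemma Pstar_feas {R : realType} {N M T : nat} (Pt : fam R N M T) mstar :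
  valid_initial Pt -> flexible_feasible Pt (Pstar Pt mstar).
Proof.
move=> [h0 h1] n t; split; last exact: sum_Pstar.
move=> m; rewrite /Pstar; case: eqP => // _.
rewrite /qtilde opprB addrC subrK; exact: sumr_ge0.
Qed.

Lemma sp_push {R : realType} {N M T : nat} (Pt P : fam R N M T) mstar n t d :
  flexible_feasible Pt P ->
  state_prob (Pstar Pt mstar) n t d =
  \sum_(c : option 'I_M) state_prob P n t c * (fo mstar c == d)%:R.
Proof.
move=> hP; have [_ hs] := hP n t.
rewrite sum_opt /=; case: d => [m|] /=.
  rewrite mulr0 add0r.
  under eq_bigr => k _ do have -> : (Some mstar == Some m) = (mstar == m) by [].
  rewrite -big_distrl /=.
  have -> : \sum_(i < M) P n t i = 1 - qtilde Pt n t by exact: hs.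
  rewrite /Pstar eq_sym; case: eqP => _; by rewrite ?mulr1 ?mulr0.
have -> : \sum_(i < M) P n t i = 1 - qtilde Pt n t by exact: hs.
have -> : \sum_(i < M) Pstar Pt mstar n t i = 1 - qtilde Pt n t by exact: sum_Pstar.
by rewrite mulr1 big1 ?addr0 // => k _; rewrite mulr0.
Qed.

Lemma sp_ge0 {R : realType} {N M T : nat} (Pt P : fam R N M T) n t o :
  valid_initial Pt -> flexible_feasible Pt P -> 0 <= state_prob P n t o.
Proof.
move=> [h0 h1] hP; have [hp hs] := hP n t.
case: o => [m|] //=; rewrite hs /qtilde opprB addrC subrK subr_ge0; exact: h1.
Qed.

Lemma sp_sum {R : realType} {N M T : nat} (P : fam R N M T) n t :
  \sum_(o : option 'I_M) state_prob P n t o = 1.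
Proof. by rewrite sum_opt /= subrK. Qed.

Lemma C_strict {R : realType} (C : R -> R) y z :
  cost_ok C -> 0 <= y -> y < z -> C y < C z.
Proof.
move=> [_ [hm [hc _]]] hy hyz.
have hz : 0 <= z by apply: le_trans hy (ltW hyz).
have hne : y != z by rewrite lt_eqF.
have hl : (0 < (2^-1 : R)) && ((2^-1 : R) < 1).
  by apply/andP; split; lra.
have H2 := hc y z 2^-1 hy hz hne hl.
have H1 := hm y (2^-1 * y + (1 - 2^-1) * z) hy.
have : y <= 2^-1 * y + (1 - 2^-1) * z by lra.
move/H1 => H3; lra.
Qed.

Lemma Mstar_le {R : realType} {M : nat} (S : 'I_M -> R) mstar m :
  mstar \in Mstar S -> S mstar <= S m.
Proof. by rewrite inE => /forallP. Qed.

Lemma Yv_le {R : realType} {N M T : nat} (S : 'I_M -> R) mstar (x : fam R N M T) n t o :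
  mstar \in Mstar S -> x_feasible S x ->
  0 <= Yv S (xp S mstar x) n t (fo mstar o) <= Yv S x n t o.
Proof.
move=> hm hx; case: o => [m|] /=; last by rewrite lexx.
rewrite /xp eqxx.
have hX := xsum_ge0 S x n t hx.
have hxm : x n t m <= \sum_(k < M) x n t k.
  by rewrite (bigD1 m) //= lerDl; apply: sumr_ge0 => k _; case/andP: (hx n t k).
have := hx n t m; have := Mstar_le S mstar m hm; move=> hS /andP [h1 h2].
case: (leP (\sum_(k < M) x n t k) (S mstar)) => h; apply/andP; split; lra.
Qed.

Definition fcc {N M : nat} (mstar : 'I_M) (c : {ffun 'I_N -> option 'I_M}) :
  {ffun 'I_N -> option 'I_M} := [ffun n => fo mstar (c n)].

Lemma arg_le {R : realType} {N M T : nat} (S : 'I_M -> R) mstar (x : fam R N M T) t c :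
  (forall m, 0 < S m) -> mstar \in Mstar S -> x_feasible S x ->
  0 <= slot_arg S (xp S mstar x) t (fcc mstar c) <= slot_arg S x t c.
Proof.
move=> hS hm hx; rewrite !slot_arg_eq; apply/andP; split.
  apply: sumr_ge0 => n _; rewrite ffunE; apply: addr_ge0.
    exact: (xsum_ge0 S _ n _ (xp_feas S mstar x hS hx)).
  by case/andP: (Yv_le S mstar x n t (c n) hm hx).
apply: ler_sum => n _; rewrite ffunE; apply: lerD.
  rewrite xp_sum; by rewrite ge_min lexx.
by case/andP: (Yv_le S mstar x n t (c n) hm hx).
Qed.

Lemma cost_push {R : realType} {N M T : nat} (C : R -> R) (S : 'I_M -> R)
  (Pt P : fam R N M T) mstar x t :
  flexible_feasible Pt P ->
  slot_cost C S (Pstar Pt mstar) x t =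
  \sum_(c : {ffun 'I_N -> option 'I_M})
    (\prod_(n < N) state_prob P n t (c n)) * C (slot_arg S x t (fcc mstar c)).
Proof.
move=> hP; rewrite /slot_cost.
rewrite (push _ _ _ (fun n o => state_prob P n t o) (fun n d => state_prob (Pstar Pt mstar) n t d)
  (fo mstar) (fun d => C (slot_arg S x t d)) (fun n d => sp_push Pt P mstar n t d hP)).
by [].
Qed.

Lemma slot_le {R : realType} {N M T : nat} (C : R -> R) (S : 'I_M -> R)
  (Pt P x : fam R N M T) mstar t :
  (forall m, 0 < S m) -> valid_initial Pt -> cost_ok C -> mstar \in Mstar S ->
  flexible_feasible Pt P -> x_feasible S x ->
  slot_cost C S (Pstar Pt mstar) (xp S mstar x) t <= slot_cost C S P x t.
Proof.
move=> hS hPt hC hm hP hx; rewrite (cost_push C S Pt P mstar _ t hP) /slot_cost.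
apply: ler_sum => c _; apply: ler_wpM2l.
  by apply: prodr_ge0 => n _; exact: (sp_ge0 Pt P n t _ hPt hP).
have /andP [h1 h2] := arg_le S mstar x t c hS hm hx.
by case: hC => _ [hmono _]; apply: hmono.
Qed.

Lemma obj_le {R : realType} {N M T : nat} (C : R -> R) (S : 'I_M -> R)
  (Pt P x : fam R N M T) mstar :
  (forall m, 0 < S m) -> valid_initial Pt -> cost_ok C -> mstar \in Mstar S ->
  flexible_feasible Pt P -> x_feasible S x ->
  objective C S (Pstar Pt mstar) (xp S mstar x) <= objective C S P x.
Proof.
move=> hS hPt hC hm hP hx; rewrite /objective; apply: ler_wpM2l.
  by rewrite invr_ge0 ler0n.
by apply: ler_sum => t _; exact: slot_le.
Qed.

Lemma sum_strict {R : realType} (I : finType) (a b : I -> R) i0 :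
  (forall i, a i <= b i) -> a i0 < b i0 -> \sum_i a i < \sum_i b i.
Proof.
move=> hab h0; rewrite (bigD1 i0) //= [X in _ < X](bigD1 i0) //=.
by apply: ltr_leD => //; apply: ler_sum => i _.
Qed.

Lemma exists_pos {R : realType} {N M T : nat} (Pt P : fam R N M T) n t :
  valid_initial Pt -> flexible_feasible Pt P ->
  exists o, 0 < state_prob P n t o.
Proof.
move=> hPt hP; apply/existsP; apply: contraT; rewrite negb_exists => /forallP H.
have : \sum_(o : option 'I_M) state_prob P n t o = 0.
  apply: big1 => o _; apply/eqP; rewrite eq_le (sp_ge0 Pt P n t o hPt hP) andbT.
  by rewrite leNgt; exact: H.
by rewrite sp_sum => /eqP; rewrite oner_eq0.
Qed.

Lemma exists_c {R : realType} {N M T : nat} (Pt P : fam R N M T) t n0 o0 :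
  valid_initial Pt -> flexible_feasible Pt P -> 0 < state_prob P n0 t o0 ->
  exists c : {ffun 'I_N -> option 'I_M},
    c n0 = o0 /\ 0 < \prod_(n < N) state_prob P n t (c n).
Proof.
move=> hPt hP h0.
exists [ffun n => if n == n0 then o0 else odflt None [pick o | 0 < state_prob P n t o]].
split; first by rewrite ffunE eqxx.
apply: prodr_gt0 => n _; rewrite ffunE; case: eqP => [->//|_].
case: pickP => [ o1 Ho1 // | Hn ].
have [ k Hk ] := exists_pos Pt P n t hPt hP.
by move: (Hn k); rewrite Hk.
Qed.

Lemma slot_lt {R : realType} {N M T : nat} (C : R -> R) (S : 'I_M -> R)
  (Pt P x : fam R N M T) mstar t (c0 : {ffun 'I_N -> option 'I_M}) :
  (forall m, 0 < S m) -> valid_initial Pt -> cost_ok C -> mstar \in Mstar S ->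
  flexible_feasible Pt P -> x_feasible S x ->
  0 < \prod_(n < N) state_prob P n t (c0 n) ->
  slot_arg S (xp S mstar x) t (fcc mstar c0) < slot_arg S x t c0 ->
  slot_cost C S (Pstar Pt mstar) (xp S mstar x) t < slot_cost C S P x t.
Proof.
move=> hS hPt hC hm hP hx hw hlt; rewrite (cost_push C S Pt P mstar _ t hP) /slot_cost.
rewrite (bigD1 c0) //= [X in _ < X](bigD1 c0) //=.
apply: ltr_leD.
  rewrite ltr_pM2l //; apply: C_strict => //.
  by case/andP: (arg_le S mstar x t c0 hS hm hx).
apply: ler_sum => c _; apply: ler_wpM2l.
  by apply: prodr_ge0 => n _; exact: (sp_ge0 Pt P n t _ hPt hP).
have /andP [h1 h2] := arg_le S mstar x t c hS hm hx.
by case: hC => _ [hmono _]; apply: hmono.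
Qed.

Lemma obj_lt {R : realType} {N M T : nat} (C : R -> R) (S : 'I_M -> R)
  (Pt P x : fam R N M T) mstar t0 :
  (forall m, 0 < S m) -> valid_initial Pt -> cost_ok C -> mstar \in Mstar S ->
  flexible_feasible Pt P -> x_feasible S x ->
  slot_cost C S (Pstar Pt mstar) (xp S mstar x) t0 < slot_cost C S P x t0 ->
  objective C S (Pstar Pt mstar) (xp S mstar x) < objective C S P x.
Proof.
move=> hS hPt hC hm hP hx hlt; rewrite /objective ltr_pM2l.
  apply: (sum_strict _ _ _ t0) => // t; exact: slot_le.
by rewrite invr_gt0 ltr0n; case: T t0 {hP hx hlt hPt x P Pt} => [[]|].
Qed.

Lemma S_gt {R : realType} {M : nat} (S : 'I_M -> R) mstar m0 :
  #|Mstar S| = 1%N -> mstar \in Mstar S -> m0 != mstar -> S mstar < S m0.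
Proof.
move=> /eqP /cards1P [a Ha] hm hne.
have hn : m0 \notin Mstar S.
  apply/negP; rewrite Ha inE => /eqP E; move: hm hne; rewrite Ha inE => /eqP ->.
  by rewrite E eqxx.
move: hn; rewrite inE negb_forall => /existsP [m' hm'].
rewrite -ltNge in hm'; exact: le_lt_trans (Mstar_le S mstar m' hm) hm'.
Qed.

Lemma arg_lt {R : realType} {N M T : nat} (S : 'I_M -> R) mstar (x : fam R N M T) t (c : {ffun 'I_N -> option 'I_M}) n0 :
  (forall m, 0 < S m) -> mstar \in Mstar S -> x_feasible S x ->
  \sum_(m < M) xp S mstar x n0 (ordS t) m + Yv S (xp S mstar x) n0 t (fo mstar (c n0))
   < \sum_(m < M) x n0 (ordS t) m + Yv S x n0 t (c n0) ->
  slot_arg S (xp S mstar x) t (fcc mstar c) < slot_arg S x t c.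
Proof.
move=> hS hm hx hlt; rewrite !slot_arg_eq; apply: (sum_strict _ _ _ n0) => [n|]; rewrite ffunE //.
apply: lerD.
  rewrite xp_sum; by rewrite ge_min lexx.
by case/andP: (Yv_le S mstar x n t (c n) hm hx).
Qed.

Lemma strict_main {R : realType} {N M T : nat} (C : R -> R) (S : 'I_M -> R)
  (Pt P x : fam R N M T) mstar n0 t0 m0 :
  (forall m, 0 < S m) -> valid_initial Pt -> cost_ok C -> mstar \in Mstar S ->
  flexible_feasible Pt P -> x_feasible S x -> #|Mstar S| = 1%N ->
  m0 != mstar -> 0 < P n0 t0 m0 ->
  objective C S (Pstar Pt mstar) (xp S mstar x) < objective C S P x.
Proof.
move=> hS hPt hC hm hP hx hcard hne hpos.
have hSg := S_gt S mstar m0 hcard hm hne.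
have hX := xsum_ge0 S x n0 t0 hx.
case: (leP (\sum_(k < M) x n0 t0 k) (S mstar)) => hXS.
  have [c [hc0 hw]] := exists_c Pt P t0 n0 (Some m0) hPt hP hpos.
  apply: (obj_lt C S Pt P x mstar t0) => //.
  apply: (slot_lt C S Pt P x mstar t0 c) => //.
  apply: (arg_lt S mstar x t0 c n0) => //; rewrite hc0 /=.
  apply: ler_ltD; first by rewrite xp_sum ge_min lexx.
  rewrite /xp eqxx.
  have hxm : x n0 t0 m0 <= \sum_(k < M) x n0 t0 k.
    by rewrite (bigD1 m0) //= lerDl; apply: sumr_ge0 => k _; case/andP: (hx n0 t0 k).
  rewrite (min_idPl hXS); lra.
pose s := ord_pred t0.
have hs : ordS s = t0 by rewrite /s ord_predK.
have [ k ho ] := exists_pos Pt P n0 s hPt hP.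
have [c [hc0 hw]] := exists_c Pt P s n0 k hPt hP ho.
apply: (obj_lt C S Pt P x mstar s) => //.
apply: (slot_lt C S Pt P x mstar s c) => //.
apply: (arg_lt S mstar x s c n0) => //.
apply: ltr_leD; last by case/andP: (Yv_le S mstar x n0 s (c n0) hm hx).
rewrite xp_sum hs (min_idPr (ltW hXS)) //.
Qed.
Theorem theorem4 (R : realType) (N M T : nat) (hT : (0 < T)%N)
    (S : 'I_M -> R) (hS : forall m, 0 < S m)
    (Pt : fam R N M T) (hPt : valid_initial Pt)
    (C : R -> R) (hC : cost_ok C)
    (mstar : 'I_M) (hmstar : mstar \in Mstar S)
    (xstar : fam R N M T) (hxs_feas : x_feasible S xstar)
    (hxs_min : forall x, x_feasible S x ->
       objective C S (Pstar Pt mstar) xstar <= objective C S (Pstar Pt mstar) x) :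
  (forall (P x : fam R N M T), flexible_feasible Pt P -> x_feasible S x ->
     objective C S (Pstar Pt mstar) xstar <= objective C S P x)
  /\
  (#|Mstar S| = 1%N ->
   forall (P x : fam R N M T), flexible_feasible Pt P -> x_feasible S x ->
     (forall (P' x' : fam R N M T), flexible_feasible Pt P' -> x_feasible S x' ->
        objective C S P x <= objective C S P' x') ->
     (forall n t m, P n t m = Pstar Pt mstar n t m)
     /\
     ((forall x', x_feasible S x' ->
         (forall x'', x_feasible S x'' ->
            objective C S (Pstar Pt mstar) x' <= objective C S (Pstar Pt mstar) x'') ->
         forall n t m, x' n t m = xstar n t m) ->
      forall n t m, x n t m = xstar n t m)).
Proof.
have part1 : forall (P x : fam R N M T), flexible_feasible Pt P -> x_feasible S x ->
     objective C S (Pstar Pt mstar) xstar <= objective C S P x.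
  move=> P x hP hx.
  apply: le_trans (hxs_min _ (xp_feas S mstar x hS hx)) _.
  exact: obj_le.
split=> // hcard P x hP hx hopt.
have hz : forall n t m, m != mstar -> P n t m = 0.
  move=> n t m hne; have [hp _] := hP n t.
  apply/eqP; rewrite eq_le hp andbT leNgt; apply/negP => hpos.
  have := strict_main C S Pt P x mstar n t m hS hPt hC hmstar hP hx hcard hne hpos.
  have := hopt _ _ (Pstar_feas Pt mstar hPt) (xp_feas S mstar x hS hx).
  by move=> h1 h2; move: (le_lt_trans h1 h2); rewrite ltxx.
have hPe : forall n t m, P n t m = Pstar Pt mstar n t m.
  move=> n t m; rewrite /Pstar; case: eqP => [->|/eqP hne]; last exact: hz.
  have [_ hs] := hP n t.
  rewrite -hs (bigD1 mstar) //= big1 ?addr0 // => k hk; exact: hz.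
split=> // huniq n t m; apply: huniq => // x'' hx''.
have eP : Pstar Pt mstar = P.
  apply: funext => n'; apply: funext => t'; apply: funext => m'; by rewrite hPe.
rewrite eP; exact: hopt.
Qed.
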